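(* Let $R$ be a noetherian integral domain, $n\ge1$, $R[n]=R[t]/(t^n)$, and $M$ an $R[n]$-module of finite type. Let $M^\vee=\mathrm{Hom}_{R[n]}(M,R[n])$ and let $t_M:M\to M^{\vee\vee}$ be the canonical morphism, $t_M(m)(\phi)=\phi(m)$. Then $\mathrm{coker}(t_M)$ is a torsion module.
   Context: An element $u=\sum_{i=0}^{n-1}u_it^i\in R[n]$ ($u_i\in R$) is a non-zero-divisor iff $u_0\ne0$; let $S_n$ be the set of non-zero-divisors. For an $R[n]$-module $N$, the torsion submodule $T(N)$ is the set of $m\in N$ such that $\alpha m=0$ for some $\alpha\in S_n$; $N$ is a torsion module if $N=T(N)$. *)

(* Defs.v *)
From HB Require Import structures.
From mathcomp Require Import all_boot all_algebra.
Set Implicit Arguments. Unset Strict Implicit. Unset Printing Implicit Defensive.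
Import GRing.Theory.
Local Open Scope ring_scope.

(* R[n] = R[t]/(t^n), realised by MathComp's quotient ring {poly %/ 'X^n}
   (for n >= 1, 'X^n is monic of size >= 2, so this is exactly R[t]/(t^n)). *)
Definition Rn (R : comNzRingType) (n : nat) := {poly %/ ('X^n : {poly R})}.

Definition is_ideal (A : comNzRingType) (I : A -> Prop) :=
  [/\ I 0, (forall x y, I x -> I y -> I (x + y)) & (forall a x, I x -> I (a * x))].

Definition noetherian (A : comNzRingType) :=
  forall I : A -> Prop, is_ideal I ->
    exists (k : nat) (g : 'I_k -> A),
      forall x, I x <-> exists c : 'I_k -> A, x = \sum_(i < k) c i * g i.

Definition finite_type (A : comNzRingType) (M : lmodType A) :=
  exists (k : nat) (v : 'I_k -> M),
    forall m : M, exists c : 'I_k -> A, m = \sum_(i < k) c i *: v i.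

Definition nonzerodivisor (A : comNzRingType) (a : A) :=
  forall x : A, a * x = 0 -> x = 0.

Definition is_dual (A : comNzRingType) (M : lmodType A) (phi : M -> A) :=
  forall (a : A) (x y : M), phi (a *: x + y) = a * phi x + phi y.

(* psi is an element of the bidual M^vv = Hom_A(M^v, A): an A-linear map on
   the dual (only its values on elements of M^v matter) *)
Definition is_bidual (A : comNzRingType) (M : lmodType A) (psi : (M -> A) -> A) :=
  forall (a : A) (phi1 phi2 : M -> A), is_dual phi1 -> is_dual phi2 ->
    psi (fun m => a * phi1 m + phi2 m) = a * psi phi1 + psi phi2.

Definition tM (A : comNzRingType) (M : lmodType A) (m : M) : (M -> A) -> A :=
  fun phi => phi m.

(* coker(t_M) is torsion: every element psi of M^vv has a multiple alpha*psi,
   alpha a non-zero-divisor, lying in the image of t_M (equality in M^vv,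
   i.e. as maps on M^v) *)
Definition coker_tM_torsion (A : comNzRingType) (M : lmodType A) :=
  forall psi : (M -> A) -> A, is_bidual psi ->
    exists alpha : A, nonzerodivisor alpha /\
      exists m : M, forall phi : M -> A, is_dual phi ->
        alpha * psi phi = tM m phi.

(* Main.v *)
From HB Require Import structures.
From mathcomp Require Import all_boot all_algebra.
From Stdlib Require Import Classical.
From mathcomp Require Import zify.
From Stdlib Require Import FunctionalExtensionality.
From mathcomp Require Import ring.
Require Import Defs.
Set Implicit Arguments. Unset Strict Implicit. Unset Printing Implicit Defensive.
Import GRing.Theory.
Local Open Scope ring_scope.
Local Open Scope quotient_scope.

Lemma nat_max (Q : nat -> Prop) (N : nat) :
  Q 0%N -> (forall e, Q e -> (e <= N)%N) -> exists d, Q d /\ forall e, Q e -> (e <= d)%N.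
Proof.
move=> Q0 QN.
have H : forall k, (exists d, Q d /\ forall e, Q e -> (e <= d + k)%N) ->
   exists d, Q d /\ forall e, Q e -> (e <= d)%N.
  elim=> [|k IH] [d [Qd Hd]].
    by exists d; split => // e /Hd; rewrite addn0.
  apply: IH; case: (classic (exists e, Q e /\ (d + k < e)%N)) => [[e [Qe lte]]|ne].
    exists e; split => // e' /Hd h; apply: leq_trans h _.
    lia.
  exists d; split => // e Qe; rewrite leqNgt; apply/negP => lt.
  by apply: ne; exists e.
by apply: (H N); exists 0%N; split => // e /QN.
Qed.

Section Frac.
Variable R : idomainType.
Local Notation F := {fraction R}.
Local Notation "x %:F" := (@tofrac R x).

Lemma frac_numden (x : F) : exists a b : R, b != 0 /\ x * b%:F = a%:F.
Proof.
elim/quotW: x => y; exists \n_y, \d_y; split; first exact: denom_ratioP.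
have E : forall c : R, c%:F = \pi_F (Ratio c 1) by move=> c; rewrite /tofrac; unlock.
rewrite !E.
change (FracField.mul (\pi_F y) (\pi_F (Ratio \d_y 1)) = \pi_F (Ratio \n_y 1)).
rewrite piE. apply/eqmodP => /=. rewrite FracField.equivfE /FracField.mulf /=.
by rewrite !numden_Ratio ?mulf_neq0 ?oner_eq0 ?denom_ratioP // !mulr1 mulrC.
Qed.

Lemma tofrac_inj : injective (@tofrac R).
Proof. by move=> p q h; apply/eqP; rewrite -tofrac_eq h. Qed.

Lemma clear_rV N (u : 'rV[F]_N) :
  exists b : R, b != 0 /\ exists a : 'rV[R]_N, b%:F *: u = map_mx (@tofrac R) a.
Proof.
have : forall j : 'I_N, exists p : R * R, p.2 != 0 /\ u 0 j * p.2%:F = p.1%:F.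
  by move=> j; have [a [b [bn0 h]]] := frac_numden (u 0 j); exists (a, b).
case/fin_all_exists => g hg.
exists (\prod_j (g j).2); split; first by rewrite prodf_seq_neq0; apply/allP => j _; case: (hg j).
exists (\row_j ((g j).1 * \prod_(l | l != j) (g l).2)).
apply/matrixP => i j; rewrite !mxE ord1 (bigD1 j) //= !rmorphM mulrAC [X in X * _]mulrC.
by case: (hg j) => _ ->.
Qed.
End Frac.

Section Key.
Variables (R : idomainType) (T : Type) (P : T -> Prop) (N : nat).
Variables (E : T -> 'rV[R]_N) (f : T -> R) (comb : R -> T -> T -> T) (z : T).
Hypotheses (Pz : P z) (Ez : E z = 0) (fz : f z = 0)
 (Pc : forall a x y, P x -> P y -> P (comb a x y))
 (Ec : forall a x y, P x -> P y -> E (comb a x y) = a *: E x + E y)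
 (fc : forall a x y, P x -> P y -> f (comb a x y) = a * f x + f y)
 (Ef0 : forall x, P x -> E x = 0 -> f x = 0).
Local Notation F := {fraction R}.
Local Notation "x %:F" := (@tofrac R x).

Lemma lin_comb d (xs : 'I_d -> T) (a : 'I_d -> R) (s : seq 'I_d) :
  (forall i, P (xs i)) ->
  let y := foldr (fun i acc => comb (a i) (xs i) acc) z s in
  [/\ P y, E y = \sum_(i <- s) a i *: E (xs i) & f y = \sum_(i <- s) a i * f (xs i)].
Proof.
move=> Pxs; elim: s => [|i s [IH1 IH2 IH3]] /=; first by rewrite !big_nil.
by rewrite !big_cons; split; [apply: Pc | rewrite Ec ?IH2 | rewrite fc ?IH3].
Qed.

Lemma lin_rel d (xs : 'I_d -> T) (a : 'I_d -> R) (s : R) x :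
  (forall i, P (xs i)) -> P x ->
  s *: E x = \sum_i a i *: E (xs i) -> s * f x = \sum_i a i * f (xs i).
Proof.
move=> Pxs Px hE.
have [P1 E1 f1] := lin_comb (fun i => - a i) (index_enum _) Pxs.
set y := foldr _ _ _ in P1 E1 f1.
have := Ef0 (Pc s Px P1); rewrite Ec // fc // E1 f1.
rewrite (eq_bigr (fun i => - (a i *: E (xs i)))); last by move=> i _; rewrite scaleNr.
rewrite (eq_bigr (fun i => - (a i * f (xs i)))); last by move=> i _; rewrite mulNr.
rewrite !sumrN -hE subrr => /(_ erefl) /eqP; rewrite subr_eq0 => /eqP //.
Qed.

Definition EK x : 'rV[F]_N := map_mx (@tofrac R) (E x).

Definition Fam d := exists X : 'M[F]_(d, N), row_free X /\ forall i, exists y, P y /\ row i X = EK y.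

Lemma max_fam : exists d, Fam d /\ forall e, Fam e -> (e <= d)%N.
Proof.
apply: (@nat_max _ N).
  exists 0; split; first by rewrite /row_free -leqn0 rank_leq_row.
  by case.
by move=> e [X [rX _]]; rewrite -(eqP rX); apply: rank_leq_col.
Qed.

Lemma key : exists r : R, r != 0 /\ exists c : 'rV[R]_N,
  forall x, P x -> r * f x = \sum_j c 0 j * E x 0 j.
Proof.
have [d [[X [rfX rowX]] maxd]] := max_fam.
have [xs hxs] := fin_all_exists rowX.
have Pxs : forall i, P (xs i) by move=> i; case: (hxs i).
have inX : forall x, P x -> (EK x <= X)%MS.
  move=> x Px; apply/negPn/negP => nx.
  have : Fam d.+1.
    exists (col_mx (EK x) X); split.
      have sub : (X <= col_mx (EK x) X)%MS by rewrite -addsmxE addsmxSr.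
      have := ltn_leqif (mxrank_leqif_sup sub).
      rewrite col_mx_sub (negbTE nx) /= (eqP rfX) => lt.
      have := rank_leq_row (col_mx (EK x) X).
      by rewrite /row_free => le; rewrite eqn_leq le /=; exact: lt.
    move=> i; rewrite -(splitK (i : 'I_(1 + d))); case: (split _) => j /=.
      by exists x; split => //; rewrite (rowKu j (EK x) X); apply/matrixP => a b; rewrite mxE !ord1.
    by rewrite (rowKd j (EK x) X); case: (hxs j) => Pj hj; exists (xs j).
  by move/maxd; rewrite ltnn.
have rfT : row_full X^T by rewrite /row_full mxrank_tr.
pose B : 'rV[F]_d := \row_i (f (xs i))%:F.
have [cK hcK] : exists cK : 'rV[F]_N, cK *m X^T = B.
  by exists (B *m pinvmx X^T); exact: mulmxKpV (submx_full _ rfT).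
have [b [bn0 [cR hcR]]] := clear_rV cK.
have hrow : forall l, \sum_j cR 0 j * E (xs l) 0 j = b * f (xs l).
  move=> l; apply: tofrac_inj; rewrite rmorph_sum rmorphM.
  have := congr1 (fun M : 'rV[F]_d => b%:F * M 0 l) hcK; rewrite /B mxE => <-.
  rewrite mxE big_distrr; apply: eq_bigr => j _ /=; rewrite tofracM.
  have := congr1 (fun M : 'rV[F]_N => M 0 j) hcR; rewrite !mxE => <-.
  case: (hxs l) => _ /(congr1 (fun M : 'rV[F]_N => M 0 j)); rewrite !mxE => ->.
  by rewrite mulrA.
exists b; split => //; exists cR => x Px.
have [w hw] := submxP (inX x Px).
have [s [sn0 [a ha]]] := clear_rV w.
have relR : s *: E x = \sum_i a 0 i *: E (xs i).
  apply/matrixP => i j; apply: tofrac_inj; rewrite summxE rmorph_sum !mxE ord1 tofracM.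
  have := congr1 (fun M : 'rV[F]_N => s%:F * M 0 j) hw; rewrite /EK !mxE => ->.
  rewrite big_distrr; apply: eq_bigr => l _ /=; rewrite mxE tofracM mulrA.
  have := congr1 (fun M : 'rV[F]_d => M 0 l) ha; rewrite !mxE => ->.
  case: (hxs l) => _ /(congr1 (fun M : 'rV[F]_N => M 0 j)); rewrite !mxE => ->.
  done.
have hs := lin_rel Pxs Px relR.
apply: (mulfI sn0).
rewrite mulrCA hs big_distrr /=.
under eq_bigr do rewrite mulrCA -hrow big_distrr.
rewrite exchange_big /= big_distrr; apply: eq_bigr => j _ /=.
rewrite [RHS]mulrCA; under eq_bigr do rewrite mulrCA.
rewrite -big_distrr /=; congr (_ * _).
have := congr1 (fun M : 'rV[R]_N => M 0 j) relR; rewrite summxE !mxE => ->.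
by apply: eq_bigr => l _; rewrite mxE.
Qed.
End Key.

Section Main.
Variables (R : idomainType) (nn : nat).
Local Notation A := (Rn R nn.+1).
Local Notation h := ('X^(nn.+1) : {poly R}).

Definition pA (p : A) : {poly R} := polyn p.

Lemma pA_inj : injective pA.
Proof. by move=> p q; apply: val_inj. Qed.

Lemma sizeA (p : A) : (size (pA p) <= nn.+1)%N.
Proof. by rewrite -ltnS; apply: (leq_trans (size_mk_monic p)); rewrite mk_monic_Xn size_polyXn. Qed.

Lemma coefA_big (p : A) l : (nn < l)%N -> (pA p)`_l = 0.
Proof. by move=> lt; apply: (leq_sizeP _ _ (sizeA p)). Qed.

Lemma pA0 : pA 0 = 0. Proof. by []. Qed.
Lemma pAD p q : pA (p + q) = pA p + pA q. Proof. by []. Qed.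
Lemma pAsum I (r : seq I) (F : I -> A) : pA (\sum_(i <- r) F i) = \sum_(i <- r) pA (F i).
Proof. by rewrite /pA (poly_of_qpoly_sum r xpredT F). Qed.
Lemma pAZ (a : R) p : pA (a%:A * p) = a *: pA p.
Proof. by rewrite mulr_algl. Qed.

Lemma rmod_take (P : {poly R}) : Pdiv.CommonRing.rmodp P (mk_monic h) = take_poly nn.+1 P.
Proof. by rewrite mk_monic_Xn -Pdiv.RingMonic.take_poly_rmodp. Qed.

Lemma coefAM (p q : A) l : (l <= nn)%N -> (pA (p * q))`_l = (pA p * pA q)`_l.
Proof.
move=> le; rewrite /pA poly_of_qpolyM rmod_take.
by rewrite coef_take_poly ltnS le.
Qed.

Definition tpow (e : nat) : A := in_qpoly _ 'X^e.

Lemma tpowE e : (e <= nn)%N -> pA (tpow e) = 'X^e.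
Proof.
move=> le; rewrite /pA /tpow in_qpoly_small // mk_monic_Xn !size_polyXn.
by rewrite ltnS ltnS.
Qed.

Lemma coef_tpow (p : A) l : (l <= nn)%N -> (pA p)`_l = (pA (tpow (nn - l) * p))`_nn.
Proof.
move=> le; rewrite coefAM // tpowE ?leq_subr // coefXnM.
by rewrite ltnNge leq_subr /= subKn.
Qed.

Lemma coefAM_top (p q : A) : (pA (p * q))`_nn = \sum_(j < nn.+1) (pA p)`_j * (pA q)`_(nn - j).
Proof. by rewrite coefAM // coefM. Qed.

End Main.

Section Duals.
Variables (B : comNzRingType) (M : lmodType B).

Lemma dual0 (phi : M -> B) : is_dual phi -> phi 0 = 0.
Proof.
move=> h; have := h 1 0 0; rewrite scale1r addr0 mul1r.
by move/(congr1 (fun x => x - phi 0)); rewrite addrK subrr.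
Qed.

Lemma dual_sum (phi : M -> B) k (c : 'I_k -> B) (v : 'I_k -> M) :
  is_dual phi -> phi (\sum_i c i *: v i) = \sum_i c i * phi (v i).
Proof.
move=> h; elim/big_rec2: _ => [|i y1 y2 _ <-]; first exact: dual0.
by rewrite h.
Qed.

Lemma dual_comb (a : B) (phi1 phi2 : M -> B) :
  is_dual phi1 -> is_dual phi2 -> is_dual (fun m => a * phi1 m + phi2 m).
Proof.
move=> h1 h2 b x y; rewrite h1 h2; ring.
Qed.

Lemma dual_z : is_dual (fun _ : M => (0 : B)).
Proof. by move=> a x y; rewrite mulr0 addr0. Qed.

Lemma bidual0 (psi : (M -> B) -> B) : is_bidual psi -> psi (fun _ => 0) = 0.
Proof.
move=> h; have := h 1 _ _ dual_z dual_z.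
rewrite (_ : (fun m : M => 1 * 0 + 0) = (fun _ => 0)); last first.
  by apply: functional_extensionality => m; rewrite mul1r addr0.
by rewrite mul1r; move/(congr1 (fun x => x - psi (fun _ => 0))); rewrite addrK subrr.
Qed.
End Duals.

Theorem proposition3p5p3 (R : idomainType) (n : nat) (hn : (0 < n)%N)
  (hR : noetherian R) (M : lmodType (Rn R n)) (hM : finite_type M) :
  coker_tM_torsion M.
Proof.
case: n hn M hM => // nn _ M [k [v hv]] psi hpsi.
pose z : M -> Rn R nn.+1 := fun _ => 0.
pose comb (a : R) (p1 p2 : M -> Rn R nn.+1) := fun m => a%:A * p1 m + p2 m.
pose E (phi : M -> Rn R nn.+1) : 'rV[R]_(k * nn.+1) :=
  mxvec (\matrix_(i < k, j < nn.+1) (pA (phi (v i)))`_(nn - j)).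
pose f phi := (pA (psi phi))`_nn.
have Pz : is_dual z := @dual_z _ M.
have Ez : E z = 0.
  rewrite /E (_ : \matrix_(i < k, j < nn.+1) _ = 0) ?linear0 //.
  by apply/matrixP => i j; rewrite !mxE /z pA0 coef0.
have fz : f z = 0 by rewrite /f bidual0 // pA0 coef0.
have Pc : forall a x y, is_dual x -> is_dual y -> is_dual (comb a x y).
  by move=> a x y hx hy; apply: dual_comb.
have Ec : forall a x y, is_dual x -> is_dual y -> E (comb a x y) = a *: E x + E y.
  move=> a x y _ _; rewrite /E -linearP; congr mxvec.
  by apply/matrixP => i j; rewrite !mxE /comb pAD pAZ coefD coefZ.
have fc : forall a x y, is_dual x -> is_dual y -> f (comb a x y) = a * f x + f y.
  by move=> a x y hx hy; rewrite /f /comb hpsi // pAD pAZ coefD coefZ.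
have Ef0 : forall x, is_dual x -> E x = 0 -> f x = 0.
  move=> phi hphi hE.
  have hv0 : forall i, phi (v i) = 0.
    move=> i; apply: pA_inj; apply/polyP => l; rewrite pA0 coef0.
    case: (leqP l nn) => [le|lt]; last by rewrite coefA_big.
    have := congr1 (fun Mx : 'rV[R]_(k * nn.+1) => Mx 0 (mxvec_index i (inord (nn - l)))) hE.
    by rewrite /= mxvecE mxE inordK ?ltnS ?leq_subr // subKn // mxE.
  suff -> : phi = z by [].
  apply: functional_extensionality => m; have [c ->] := hv m.
  by rewrite dual_sum // big1 // => i _; rewrite hv0 mulr0.
have [r [rn0 [c hc]]] := key Pz Ez fz Pc Ec fc Ef0.
pose C i j := c 0 (mxvec_index i j).
have hsum : forall phi, \sum_J c 0 J * E phi 0 J =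
    \sum_i \sum_j C i j * (pA (phi (v i)))`_(nn - j).
  move=> phi; rewrite (reindex _ (curry_mxvec_bij k nn.+1)) /= pair_big /=.
  by apply: eq_bigr => -[i j] _ /=; rewrite /E mxvecE mxE.
exists (r%:A); split.
  move=> x /(congr1 (@pA R nn)); rewrite pAZ pA0 => /eqP; rewrite scale_poly_eq0 (negbTE rn0) /=.
  by move=> /eqP hx; apply: pA_inj; rewrite hx.
pose ci i : Rn R nn.+1 := in_qpoly _ (\poly_(j < nn.+1) C i (inord j)).
have hci : forall i j, (j <= nn)%N -> (pA (ci i))`_j = C i (inord j).
  move=> i j le; rewrite /pA /ci in_qpoly_small.
    by rewrite coef_poly ltnS le.
  by rewrite mk_monic_Xn size_polyXn ltnS; apply: size_poly.
exists (\sum_i ci i *: v i); move=> phi hphi; rewrite /tM.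
apply: pA_inj; apply/polyP => l.
case: (leqP l nn) => [le|lt]; last by rewrite !coefA_big.
pose e := (nn - l)%N.
pose phie := fun m => tpow R nn e * phi m + z m.
have hphie : is_dual phie by apply: dual_comb.
have hpsie : psi phie = tpow R nn e * psi phi by rewrite /phie hpsi // bidual0 // addr0.
rewrite pAZ coefZ coef_tpow // -/e -hpsie.
rewrite -/(f phie) hc // hsum.
rewrite coef_tpow // -/e (_ : tpow R nn e * _ = phie (\sum_i ci i *: v i)); last by rewrite /phie /z addr0.
rewrite dual_sum // pAsum coef_sum; apply: eq_bigr => i _.
rewrite coefAM_top; apply: eq_bigr => j _; rewrite hci; last by rewrite -ltnS.
by rewrite inord_val.
Qed.
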